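(* Let $\mathcal{E}^1,\dots,\mathcal{E}^L$ be $m$-party quantum state ensembles, $\mathcal{E}^l=\{\eta^l_i,\rho^l_i\}_{i=1}^{n_l}$, and let $\vec{x}\in\mathbb{N}_{\vec n}$. Then $p_{\sf L}\big(\bigotimes_{l=1}^L\mathcal{E}^l\big)=\eta_{\vec x}$ if and only if $\eta_{\vec x}\rho_{\vec x}-\eta_{\vec c}\rho_{\vec c}\in\mathbb{SEP}^*$ for all $\vec c\in\mathbb{N}_{\vec n}$. Moreover, in this case $p_{\sf L}\big(\bigotimes_{l=1}^L\mathcal{E}^l\big)=p_{\sf SEP}\big(\bigotimes_{l=1}^L\mathcal{E}^l\big)$ and $p_{\sf L}\big(\bigotimes_{l=1}^L\mathcal{E}^l\big)=\prod_{l=1}^Lp_{\sf L}(\mathcal{E}^l)$.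
   Context: Each ensemble $\mathcal{E}^l$ consists of $m$-party states $\rho^l_i$ on $\mathcal{H}=\bigotimes_{k=1}^m\mathbb{C}^{d_k}$ ($m,d_k\ge2$) with nonzero probabilities $\eta^l_i$ summing to $1$. Let $\mathbb{N}_{n_l}=\{1,\dots,n_l\}$, $\vec n=(n_1,\dots,n_L)$, $\mathbb{N}_{\vec n}=\mathbb{N}_{n_1}\times\cdots\times\mathbb{N}_{n_L}$. For $\vec c=(c_1,\dots,c_L)\in\mathbb{N}_{\vec n}$ set $\eta_{\vec c}=\prod_l\eta^l_{c_l}$ and $\rho_{\vec c}=\bigotimes_l\rho^l_{c_l}$; the sequence ensemble is $\bigotimes_l\mathcal{E}^l=\{\eta_{\vec c},\rho_{\vec c}\}_{\vec c\in\mathbb{N}_{\vec n}}$, viewed as an $m$-party ensemble on $\mathcal{H}^{\otimes L}$ in which party $\mathsf{A}_k$ holds the $k$-th factor $\mathbb{C}^{d_k}$ of every copy (so it is again an $m$-party system with local dimensions $d_k^L$). Separability: an operator is separable if it is a sum of tensor products, over the parties $\mathsf{A}_1,\dots,\mathsf{A}_m$, of positive semidefinite local operators; $\mathbb{SEP}$ denotes these. $\mathbb{SEP}^*$ is the set of Hermitian $E$ with $\operatorname{Tr}(E\sigma)\ge0$ for every separable state $\sigma$ (block-positive operators), with respect to $\mathsf{A}_1,\dots,\mathsf{A}_m$. A measurement is separable if all its elements are separable, LOCC if realizable by local operations and classical communication among $\mathsf{A}_1,\dots,\mathsf{A}_m$. For an ensemble $\{\eta_j,\rho_j\}_j$, $p_{\sf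 G}$, $p_{\sf SEP}$, $p_{\sf L}$ denote the maximum of $\sum_j\eta_j\operatorname{Tr}(\rho_jM_j)$ over all measurements, separable measurements, and LOCC measurements $\{M_j\}_j$ respectively. *)

(* Defs.v *)
From HB Require Import structures.
From mathcomp Require Import all_boot all_order all_algebra.
From mathcomp Require Import complex.
From mathcomp Require Import boolp classical_sets reals.

Set Implicit Arguments.
Unset Strict Implicit.
Unset Printing Implicit Defensive.

Import Order.TTheory GRing.Theory Num.Theory.
Local Open Scope ring_scope.
Local Open Scope classical_set_scope.

Section Quantum.
Variable R : realType.
Local Notation C := (R[i]).

(* Operators on a finite-dimensional Hilbert space with orthonormal   *)
(* basis indexed by a finType T: square matrices of size #|T|.        *)
Definition Op (T : finType) := 'M[C]_#|T|.

Definition ent (T : finType) (A : Op T) (x y : T) : C :=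
  A (enum_rank x) (enum_rank y).

Definition opE (T : finType) (f : T -> T -> C) : Op T :=
  \matrix_(i, j) f (enum_val i) (enum_val j).

Definition adj (p q : nat) (A : 'M[C]_(p, q)) : 'M[C]_(q, p) := (map_mx conjc A)^T.

Definition hermitian (p : nat) (A : 'M[C]_p) : Prop := adj A = A.

Definition psd (p : nat) (A : 'M[C]_p) : Prop :=
  hermitian A /\ forall v : 'cV[C]_p, 0 <= ((adj v) *m A *m v) 0 0.

Definition state (p : nat) (A : 'M[C]_p) : Prop := psd A /\ \tr A = 1.

(* m-party systems: party k has local orthonormal basis B k, the      *)
(* global basis is the product {dffun forall k, B k}.                 *)
Definition gbasis (m : nat) (B : 'I_m -> finType) : finType :=
  {dffun forall k : 'I_m, B k}.

Definition MOp (m : nat) (B : 'I_m -> finType) := Op (gbasis B).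

Definition prod_op (m : nat) (B : 'I_m -> finType)
    (A : forall k : 'I_m, Op (B k)) : MOp B :=
  opE (fun x y : gbasis B => \prod_(k < m) ent (A k) (x k) (y k)).

Definition embed (m : nat) (B : 'I_m -> finType) (k : 'I_m)
    (A : Op (B k)) : MOp B :=
  opE (fun x y : gbasis B =>
         ent A (x k) (y k) *
         (\prod_(j < m | j != k) ((x j == y j :> B j)%:R : C))).

Definition separable (m : nat) (B : 'I_m -> finType) (E : MOp B) : Prop :=
  exists (N : nat) (f : 'I_N -> forall k : 'I_m, Op (B k)),
    (forall i k, psd (f i k)) /\
    E = \sum_(i < N) prod_op (f i).

Definition sep_dual (m : nat) (B : 'I_m -> finType) (E : MOp B) : Prop :=
  hermitian E /\
  forall sigma : MOp B, separable sigma -> state sigma ->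
    0 <= \tr (E *m sigma).

Definition povm (m : nat) (B : 'I_m -> finType) (J : finType)
    (M : J -> MOp B) : Prop :=
  (forall j, psd (M j)) /\ \sum_(j : J) M j = 1%:M.

Definition sep_meas (m : nat) (B : 'I_m -> finType) (J : finType)
    (M : J -> MOp B) : Prop :=
  povm M /\ forall j, separable (M j).

(* Finite-round LOCC protocols, described by their leaves: a list of
   pairs (K, j) where K is the product of the (local) Kraus operators
   applied along a branch of the protocol tree and j is the final
   classical output.  At each node some party k (chosen adaptively,
   depending on all previous outcomes) performs a local measurement
   with Kraus operators A_1..A_r (sum A_a^* A_a = I) and broadcasts the
   outcome a; the protocol then continues with a sub-protocol that may
   depend on a. *)
Inductive locc_leaves (m : nat) (B : 'I_m -> finType) (J : finType) :
    seq (MOp B * J) -> Prop :=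
| locc_stop (j : J) : locc_leaves [:: (1%:M, j)]
| locc_round (k : 'I_m) (A : seq (Op (B k))) (ch : seq (seq (MOp B * J))) :
    \sum_(a <- A) adj a *m a = 1%:M ->
    size ch = size A ->
    (forall i, (i < size A)%N -> locc_leaves (nth [::] ch i)) ->
    locc_leaves
      (flatten [seq [seq (p.1 *m embed (snd ach), p.2) | p <- fst ach]
               | ach <- zip ch A]).

Definition locc_meas (m : nat) (B : 'I_m -> finType) (J : finType)
    (M : J -> MOp B) : Prop :=
  exists s : seq (MOp B * J), locc_leaves s /\
    forall j, M j = \sum_(p <- s | p.2 == j) adj p.1 *m p.1.

Definition ensemble (m : nat) (B : 'I_m -> finType) (J : finType)
    (eta : J -> R) (rho : J -> MOp B) : Prop :=
  (forall j, 0 < eta j) /\ \sum_(j : J) eta j = 1 /\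
  (forall j, state (rho j)).

Definition succ (m : nat) (B : 'I_m -> finType) (J : finType)
    (eta : J -> R) (rho : J -> MOp B) (M : J -> MOp B) : R :=
  \sum_(j : J) eta j * complex.Re (\tr (rho j *m M j)).

Definition p_G (m : nat) (B : 'I_m -> finType) (J : finType)
    (eta : J -> R) (rho : J -> MOp B) : R :=
  sup [set p | exists M, povm M /\ p = succ eta rho M].

Definition p_SEP (m : nat) (B : 'I_m -> finType) (J : finType)
    (eta : J -> R) (rho : J -> MOp B) : R :=
  sup [set p | exists M, sep_meas M /\ p = succ eta rho M].

Definition p_L (m : nat) (B : 'I_m -> finType) (J : finType)
    (eta : J -> R) (rho : J -> MOp B) : R :=
  sup [set p | exists M, locc_meas M /\ p = succ eta rho M].

(* Single-copy system (local dimensions d k) and the L-copy system in *)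
(* which party k holds the k-th factor of every copy (local basis     *)
(* 'I_L -> 'I_(d k), i.e. local dimension d_k^L).                      *)
Definition qudits (m : nat) (d : 'I_m -> nat) : 'I_m -> finType :=
  fun k => 'I_(d k).

Definition copies (m : nat) (d : 'I_m -> nat) (L : nat) : 'I_m -> finType :=
  fun k => {ffun 'I_L -> 'I_(d k)}.

Definition seq_index (L : nat) (n : 'I_L -> nat) : finType :=
  {dffun forall l : 'I_L, 'I_(n l)}.

Definition slice (m : nat) (d : 'I_m -> nat) (L : nat)
    (x : gbasis (copies d L)) (l : 'I_L) : gbasis (qudits d) :=
  [ffun k : 'I_m => (x k : {ffun 'I_L -> 'I_(d k)}) l : qudits d k].

Definition seq_eta (L : nat) (n : 'I_L -> nat)
    (eta : forall l : 'I_L, 'I_(n l) -> R) (c : seq_index n) : R :=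
  \prod_(l < L) eta l (c l).

Definition seq_rho (m : nat) (d : 'I_m -> nat) (L : nat) (n : 'I_L -> nat)
    (rho : forall l : 'I_L, 'I_(n l) -> MOp (qudits d)) (c : seq_index n)
    : MOp (copies d L) :=
  opE (fun x y : gbasis (copies d L) =>
         \prod_(l < L) ent (rho l (c l)) (slice x l) (slice y l)).

End Quantum.

(* Main.v *)
Require Import Defs.
From HB Require Import structures.
From mathcomp Require Import all_boot all_order all_algebra.
From mathcomp Require Import complex.
From mathcomp Require Import boolp classical_sets reals.

Import Order.TTheory GRing.Theory Num.Theory.
Local Open Scope ring_scope.
From mathcomp Require Import ring lra.
Set Implicit Arguments.
Unset Strict Implicit.
Unset Printing Implicit Defensive.
Require Import Defs.


Section Basic.
Variable R : realType.
Local Notation C := (R[i]).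

Lemma sum_rank (T : finType) (F : 'I_#|T| -> C) :
  \sum_(i < #|T|) F i = \sum_(z : T) F (enum_rank z).
Proof.
by rewrite (reindex (@enum_rank T)) //; apply: onW_bij; exact: enum_rank_bij.
Qed.

Lemma entE (T : finType) (f : T -> T -> C) x y : ent (opE f) x y = f x y.
Proof. by rewrite /ent /opE mxE !enum_rankK. Qed.

Lemma ent_ext (T : finType) (A B : Op R T) :
  (forall x y, ent A x y = ent B x y) -> A = B.
Proof.
move=> H; apply/matrixP=> i j; have := H (enum_val i) (enum_val j).
by rewrite /ent !enum_valK.
Qed.

Lemma ent_mul (T : finType) (A B : Op R T) x y :
  ent (A *m B) x y = \sum_z ent A x z * ent B z y.
Proof. by rewrite /ent mxE sum_rank. Qed.

Lemma ent_tr (T : finType) (A : Op R T) : \tr A = \sum_x ent A x x.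
Proof. by rewrite /mxtrace sum_rank. Qed.

Lemma ent_adj (T : finType) (A : Op R T) x y : ent (adj A) x y = (ent A y x)^*%C.
Proof. by rewrite /ent /adj !mxE. Qed.

Lemma ent_add (T : finType) (A B : Op R T) x y : ent (A + B) x y = ent A x y + ent B x y.
Proof. by rewrite /ent mxE. Qed.

Lemma ent_opp (T : finType) (A : Op R T) x y : ent (- A) x y = - ent A x y.
Proof. by rewrite /ent mxE. Qed.

Lemma ent_scale (T : finType) (a : C) (A : Op R T) x y : ent (a *: A) x y = a * ent A x y.
Proof. by rewrite /ent mxE. Qed.

Lemma ent_sum (T : finType) (I : Type) (r : seq I) (P : pred I) (F : I -> Op R T) x y :
  ent (\sum_(i <- r | P i) F i) x y = \sum_(i <- r | P i) ent (F i) x y.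
Proof. by rewrite /ent summxE. Qed.

Lemma ent1 (T : finType) x y : ent (1%:M : Op R T) x y = (x == y)%:R.
Proof. by rewrite /ent mxE (inj_eq enum_rank_inj). Qed.

Lemma ent0 (T : finType) x y : ent (0 : Op R T) x y = 0.
Proof. by rewrite /ent mxE. Qed.

End Basic.


Section Parties.
Variable R : realType.
Local Notation C := (R[i]).
Variable m : nat.
Variable B : 'I_m -> finType.

Lemma prod_nat_bool (I : finType) (P : pred I) (b : I -> bool) :
  \prod_(i | P i) ((b i)%:R : C) = ([forall i, P i ==> b i])%:R.
Proof.
case: forallP => [H|nH].
  by apply: big1 => i Pi; have := H i; rewrite Pi => /= ->.
have [i0] : exists i, ~~ (P i ==> b i).
  apply: contrapT => H; apply: nH => i; apply/negPn/negP => Hi; apply: H; by exists i.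
rewrite negb_imply => /andP [Pi /negbTE bi].
by rewrite (bigD1 i0) //= bi mul0r.
Qed.

Lemma eq_gbasis (x y : gbasis B) : (x == y) = [forall k, x k == y k].
Proof.
apply/eqP/forallP => [-> //|H]; apply/ffunP => k; exact/eqP.
Qed.

Lemma ent_prod_op (f : forall k, Op R (B k)) x y :
  ent (prod_op f) x y = \prod_(k < m) ent (f k) (x k) (y k).
Proof. by rewrite /prod_op entE. Qed.

Lemma ent_prod_op_dfwith (f : forall k, Op R (B k)) k (A : Op R (B k)) x y :
  ent (prod_op (dfwith f A)) x y =
  ent A (x k) (y k) * \prod_(j < m | j != k) ent (f j) (x j) (y j).
Proof.
rewrite ent_prod_op (bigD1 k) //= dfwith_in; congr (_ * _).
apply: eq_bigr => j jk; rewrite dfwith_out //; by rewrite eq_sym.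
Qed.

Definition upd (y : gbasis B) k (t : B k) : gbasis B :=
  finfun (dfwith (fun j => y j) t).

Lemma upd_in (y : gbasis B) k (t : B k) : upd y t k = t.
Proof. by rewrite /upd ffunE dfwith_in. Qed.

Lemma upd_out (y : gbasis B) k (t : B k) j : k != j -> upd y t j = y j.
Proof. by move=> kj; rewrite /upd ffunE dfwith_out. Qed.

Lemma collapse (F : gbasis B -> C) (y : gbasis B) k :
  \sum_z F z * \prod_(j < m | j != k) ((z j == y j)%:R : C) =
  \sum_(t : B k) F (upd y t).
Proof.
under eq_bigr do rewrite prod_nat_bool.
rewrite (bigID (fun z : gbasis B => [forall j, (j != k) ==> (z j == y j)])) /=.
rewrite [X in _ + X]big1 ?addr0; last by move=> z /negbTE ->; rewrite mulr0.
under eq_bigr => z -> do rewrite mulr1.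
rewrite (reindex_onto (fun t => upd y t) (fun z : gbasis B => z k)) /=.
  apply: eq_bigl => t; rewrite upd_in eqxx andbT.
  apply/forallP => j; apply/implyP => jk; rewrite upd_out //; by rewrite eq_sym.
move=> z /forallP H; apply/ffunP => j; rewrite /upd ffunE.
case: dfwithP => //= j' kj'.
by have := H j'; rewrite eq_sym kj' /= => /eqP ->.
Qed.


Definition ones : forall k, Op R (B k) := fun k => 1%:M.

Lemma embed_prod (k : 'I_m) (A : Op R (B k)) : embed A = prod_op (dfwith ones A).
Proof.
apply: ent_ext => x y; rewrite ent_prod_op_dfwith /embed entE; congr (_ * _).
by apply: eq_bigr => j _; rewrite /ones ent1.
Qed.

Lemma prod_op_ones : prod_op ones = 1%:M.
Proof.
apply: ent_ext => x y; rewrite ent_prod_op ent1 eq_gbasis.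
rewrite (_ : [forall k, x k == y k] = [forall k, predT k ==> (x k == y k)]) //.
rewrite -prod_nat_bool; apply: eq_bigr => k _; by rewrite /ones ent1.
Qed.

Lemma prod_op_ext (f g : forall k, Op R (B k)) : (forall k, f k = g k) -> prod_op f = prod_op g.
Proof. by move=> H; apply: ent_ext => x y; rewrite !ent_prod_op; apply: eq_bigr => k _; rewrite H. Qed.

Lemma dfwith_dfwith (f : forall k, Op R (B k)) k (A A' : Op R (B k)) j :
  dfwith (dfwith f A) A' j = dfwith f A' j.
Proof. by case: (eqVneq k j) => [<-|kj]; rewrite ?dfwith_in // !dfwith_out. Qed.

Lemma dfwith_id (f : forall k, Op R (B k)) k j : dfwith f (f k) j = f j.
Proof. by case: (eqVneq k j) => [<-|kj]; rewrite ?dfwith_in // !dfwith_out. Qed.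

Lemma prod_op_mul_embed (h : forall k, Op R (B k)) k (a : Op R (B k)) :
  prod_op h *m embed a = prod_op (dfwith h (h k *m a)).
Proof.
apply: ent_ext => x y; rewrite ent_mul ent_prod_op_dfwith ent_mul.
under eq_bigr => z _.
  rewrite /embed entE mulrA.
  over.
rewrite (collapse (fun z => ent (prod_op h) x z * ent a (z k) (y k)) y k) /=.
rewrite big_distrl /=; apply: eq_bigr => t _.
rewrite ent_prod_op (bigD1 k) //= upd_in -!mulrA; congr (_ * _); rewrite mulrC; congr (_ * _).
by apply: eq_bigr => j jk; rewrite upd_out // eq_sym.
Qed.

Lemma embed_mul_prod_op (h : forall k, Op R (B k)) k (a : Op R (B k)) :
  embed a *m prod_op h = prod_op (dfwith h (a *m h k)).
Proof.
apply: ent_ext => x y; rewrite ent_mul ent_prod_op_dfwith ent_mul.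
under eq_bigr => z _.
  rewrite /embed entE [ent a _ _ * _]mulrC -mulrA mulrC.
  under eq_bigr => j _ do rewrite eq_sym.
  over.
rewrite (collapse (fun z => ent a (x k) (z k) * ent (prod_op h) z y) x k) /=.
rewrite big_distrl /=; apply: eq_bigr => t _.
rewrite ent_prod_op (bigD1 k) //= upd_in mulrA; congr (_ * _).
by apply: eq_bigr => j jk; rewrite upd_out // eq_sym.
Qed.

End Parties.
Arguments ones {R m B}.


Section Adj.
Variable R : realType.
Local Notation C := (R[i]).

Lemma adj_mul p q r (A : 'M[C]_(p, q)) (B : 'M[C]_(q, r)) :
  adj (A *m B) = adj B *m adj A.
Proof. by rewrite /adj map_mxM trmx_mul. Qed.

Lemma adjK p q (A : 'M[C]_(p, q)) : adj (adj A) = A.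
Proof. by apply/matrixP => i j; rewrite /adj !mxE conjcK. Qed.

Lemma adjD p q (A B : 'M[C]_(p, q)) : adj (A + B) = adj A + adj B.
Proof. by apply/matrixP => i j; rewrite /adj !mxE rmorphD. Qed.

Lemma adjN p q (A : 'M[C]_(p, q)) : adj (- A) = - adj A.
Proof. by apply/matrixP => i j; rewrite /adj !mxE rmorphN. Qed.

Lemma adjZ p q (a : C) (A : 'M[C]_(p, q)) : adj (a *: A) = a^*%C *: adj A.
Proof. by apply/matrixP => i j; rewrite /adj !mxE rmorphM. Qed.

Lemma adj1 p : adj (1%:M : 'M[C]_p) = 1%:M.
Proof. by apply/matrixP => i j; rewrite /adj !mxE eq_sym; case: (_ == _); rewrite ?conjc1 ?conjc0. Qed.

Lemma adj0 p q : adj (0 : 'M[C]_(p, q)) = 0.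
Proof. by apply/matrixP => i j; rewrite /adj !mxE conjc0. Qed.

Lemma psd_congr p q (H : 'M[C]_p) (a : 'M[C]_(p, q)) : psd H -> psd (adj a *m H *m a).
Proof.
move=> [hH pH]; split.
  by rewrite /Defs.hermitian !adj_mul adjK hH mulmxA.
move=> v; have := pH (a *m v); by rewrite adj_mul !mulmxA.
Qed.

Lemma psd1 p : psd (1%:M : 'M[C]_p).
Proof.
split; first exact: adj1.
move=> v; rewrite mulmx1 /adj !mxE; apply: sumr_ge0 => i _; rewrite !mxE.
by rewrite mulrC mulcJ_ge0.
Qed.

Lemma psd0 p : psd (0 : 'M[C]_p).
Proof. by split; [exact: adj0 | move=> v; rewrite mulmx0 mul0mx mxE]. Qed.

End Adj.

Section Locc.
Variable R : realType.
Local Notation C := (R[i]).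
Variable m : nat.
Variable B : 'I_m -> finType.

Lemma embed_adj k (a : Op R (B k)) : adj (embed a) = embed (adj a).
Proof.
apply: ent_ext => x y; rewrite ent_adj /embed !entE ent_adj rmorphM rmorph_prod.
congr (_ * _); apply: eq_bigr => j _; by rewrite rmorph_nat eq_sym.
Qed.

Lemma embedD k (a b : Op R (B k)) : embed (a + b) = embed a + embed b.
Proof. by apply: ent_ext => x y; rewrite ent_add /embed !entE ent_add mulrDl. Qed.

Lemma embed_sum k (r : seq (Op R (B k))) (F : Op R (B k) -> Op R (B k)) :
  embed (\sum_(a <- r) F a) = \sum_(a <- r) embed (F a).
Proof.
apply: ent_ext => x y; rewrite ent_sum /embed !entE ent_sum big_distrl /=.
by apply: eq_bigr => a _; rewrite entE.
Qed.

Lemma embed1 k : embed (1%:M : Op R (B k)) = 1%:M.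
Proof.
rewrite embed_prod -prod_op_ones; apply: prod_op_ext => j.
by case: (eqVneq k j) => [<-|kj]; rewrite ?dfwith_in // dfwith_out.
Qed.

Lemma gram_step (h : forall k, Op R (B k)) k (a : Op R (B k)) :
  adj (embed a) *m prod_op h *m embed a = prod_op (dfwith h (adj a *m h k *m a)).
Proof.
rewrite embed_adj embed_mul_prod_op prod_op_mul_embed dfwith_in.
by apply: prod_op_ext => j; rewrite dfwith_dfwith.
Qed.

Lemma embed_mul k (a b : Op R (B k)) : embed a *m embed b = embed (a *m b).
Proof.
rewrite {1}embed_prod prod_op_mul_embed dfwith_in embed_prod.
by apply: prod_op_ext => j; rewrite dfwith_dfwith.
Qed.

Definition good_leaf (K : MOp R B) :=
  exists h : forall k, Op R (B k), (forall k, psd (h k)) /\ adj K *m K = prod_op h.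

Lemma locc_inv (J : finType) (s : seq (MOp R B * J)) :
  locc_leaves s ->
  \sum_(p <- s) adj p.1 *m p.1 = 1%:M /\ (forall p, p \in s -> good_leaf p.1).
Proof.
elim=> [j | k A ch HA Hsz Hch IH].
  split; first by rewrite big_seq1 /= adj1 mulmx1.
  move=> p; rewrite inE => /eqP -> /=; exists ones; split; first by move=> k; exact: psd1.
  by rewrite adj1 mulmx1 prod_op_ones.
split.
  rewrite big_flatten /= big_map.
  rewrite (big_nth ([::], 0)) size_zip Hsz minnn big_mkord.
  transitivity (\sum_(i < size A) adj (embed (nth 0 A i)) *m embed (nth 0 A i)).
    apply: eq_bigr => i _; rewrite nth_zip ?Hsz //= big_map.
    under eq_bigr => q _ do rewrite /= adj_mul -mulmxA (mulmxA (adj q.1)).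
    rewrite -mulmx_sumr -mulmx_suml.
    by have [-> _] := IH i (ltn_ord i); rewrite mul1mx.
  rewrite -(big_mkord xpredT (fun i => adj (embed (nth 0 A i)) *m embed (nth 0 A i))).
  rewrite -(big_nth 0 xpredT (fun a => adj (embed a) *m embed a)).
  under eq_bigr do rewrite embed_adj embed_mul.
  by rewrite -embed_sum HA embed1.
move=> p /flattenP [l /mapP [ach Hach ->]] /mapP [q Hq ->] /=.
have [i Hi Hachi] := nthP ([::], 0) Hach.
move: Hi; rewrite size_zip Hsz minnn => Hi.
move: Hq; rewrite -Hachi nth_zip ?Hsz //= => Hq.
have [_ /(_ q Hq) [h [ph Hh]]] := IH i Hi.
exists (dfwith h (adj (nth 0 A i) *m h k *m nth 0 A i)); split.
  move=> j; case: (eqVneq k j) => [<-|kj]; rewrite ?dfwith_in ?dfwith_out //.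
  exact: psd_congr.
by rewrite adj_mul -mulmxA (mulmxA (adj q.1)) Hh mulmxA gram_step.
Qed.
End Locc.


Section Spec.
Variable R : realType.
Local Notation C := (R[i]).

Definition rank1 (T : finType) (w : T -> C) : Op R T := opE (fun a b => w a * (w b)^*%C).

Lemma adj_tstar p q (A : 'M[C]_(p, q)) : adj A = map_mx Num.conj_op (A ^T).
Proof. by apply/matrixP => i j; rewrite /adj !mxE. Qed.

Lemma rank1_gram (T : finType) (w : T -> C) :
  rank1 w = adj (\row_j (w (enum_val j))^*%C) *m 1%:M *m (\row_j (w (enum_val j))^*%C).
Proof.
apply: ent_ext => x y; rewrite entE mulmx1 /ent mxE big_ord1 /adj !mxE !enum_rankK.
by rewrite conjcK.
Qed.

Lemma psd_rank1 (T : finType) (w : T -> C) : psd (rank1 w).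
Proof. by rewrite rank1_gram; apply: psd_congr; exact: psd1. Qed.

Lemma psd_scale p (c : C) (A : 'M[C]_p) : 0 <= c -> psd A -> psd (c *: A).
Proof.
move=> c0 [hA pA]; split.
  rewrite /Defs.hermitian adjZ hA; congr (_ *: _).
  by case: c c0 => a b; rewrite lecE /= => /andP [/eqP -> _]; rewrite oppr0.
move=> v; rewrite -scalemxAr -scalemxAl mxE; exact: mulr_ge0.
Qed.

Lemma psd_diag p (A : 'M[C]_p) i : psd A -> 0 <= A i i.
Proof.
move=> [_ pA]; have := pA (delta_mx i 0).
rewrite /adj !mxE (bigD1 i) //= big1 ?addr0; last first.
  by move=> j ji; rewrite !mxE (negbTE ji) /= mulr0.
rewrite !mxE !eqxx /= mulr1 (bigD1 i) //= big1 ?addr0; last first.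
  by move=> j ji; rewrite !mxE (negbTE ji) andFb mulr0n conjc0 mul0r.
by rewrite !mxE !eqxx andbT mulr1n conjc1 mul1r.
Qed.

Lemma spectral_psd (T : finType) (A : Op R T) : psd A ->
  exists (lam : 'I_#|T| -> C) (w : 'I_#|T| -> T -> C),
    (forall a, 0 <= lam a) /\ A = \sum_a lam a *: rank1 (w a).
Proof.
move=> pA; have hA := pA.1.
have nA : A \is normalmx.
  by apply/eqP; rewrite -!adj_tstar hA.
have Aeq := (orthomx_spectralP nA).
set P := spectralmx A in Aeq; set D := spectral_diag A in Aeq.
have uP : P \is unitarymx by exact: spectral_unitarymx.
rewrite invmx_unitary // -adj_tstar in Aeq.
have PP : P *m adj P = 1%:M by rewrite adj_tstar; apply/eqP; exact: uP.
exists (fun a => D 0 a), (fun a x => (P a (enum_rank x))^*%C); split.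
  move=> a; have := psd_diag a (psd_congr (adj P) pA).
  rewrite adjK Aeq !mulmxA PP mul1mx -mulmxA PP mulmx1 mxE eqxx mulr1n.
  by [].
apply: ent_ext => x y; rewrite ent_sum {1}Aeq /ent mxE.
apply: eq_bigr => a _.
rewrite mul_mx_diag [in RHS]mxE /rank1 /opE !mxE !enum_rankK conjcK.
by rewrite [_ * D 0 a]mulrC -!mulrA.
Qed.

End Spec.


Section Core.
Variable R : realType.
Local Notation C := (R[i]).
Variable m : nat.
Variable B : 'I_m -> finType.

Definition pp (W : forall k, B k -> C) : MOp R B := prod_op (fun k => rank1 (W k)).
Definition psi (W : forall k, B k -> C) (X : gbasis B) : C := \prod_k W k (X k).

Lemma pp_rank1 W : pp W = rank1 (psi W).
Proof.
apply: ent_ext => x y; rewrite ent_prod_op /rank1 entE /psi rmorph_prod -big_split /=.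
by apply: eq_bigr => k _; rewrite entE.
Qed.

Lemma tr_rank1 (T : finType) (w : T -> C) : \tr (rank1 w) = \sum_x w x * (w x)^*%C.
Proof. by rewrite ent_tr; apply: eq_bigr => x _; rewrite entE. Qed.

Lemma tr_rank1_ge0 (T : finType) (w : T -> C) : 0 <= \tr (rank1 w).
Proof. by rewrite tr_rank1; apply: sumr_ge0 => x _; exact: mulcJ_ge0. Qed.

Lemma tr_rank1_eq0 (T : finType) (w : T -> C) : \tr (rank1 w) = 0 -> rank1 w = 0.
Proof.
rewrite tr_rank1 => /eqP; rewrite psumr_eq0; last by move=> x _; exact: mulcJ_ge0.
move=> /allP H.
have w0 x : w x = 0.
  by have := H x (mem_index_enum x); rewrite implyTb mulf_eq0 conjc_eq0 orbb => /eqP.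
by apply: ent_ext => x y; rewrite entE ent0 w0 mul0r.
Qed.

Lemma prod_op_lin (f : forall k, Op R (B k)) k (I : Type) (r : seq I)
   (c : I -> C) (A : I -> Op R (B k)) :
  prod_op (dfwith f (\sum_(a <- r) c a *: A a)) =
  \sum_(a <- r) c a *: prod_op (dfwith f (A a)).
Proof.
apply: ent_ext => x y; rewrite ent_prod_op_dfwith ent_sum ent_sum big_distrl /=.
by apply: eq_bigr => a _; rewrite !ent_scale ent_prod_op_dfwith mulrA.
Qed.

Lemma prod_op_scale (f : forall k, Op R (B k)) k (c : C) :
  prod_op (dfwith f (c *: f k)) = c *: prod_op f.
Proof.
apply: ent_ext => x y; rewrite ent_prod_op_dfwith ent_scale ent_scale ent_prod_op.
by rewrite [in RHS](bigD1 k) //= mulrA.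
Qed.

Lemma sep_dual_pp (E : MOp R B) (k0 : 'I_m) (W : forall k, B k -> C) :
  sep_dual E -> 0 <= \tr (E *m pp W).
Proof.
move=> [hE sE].
have t0 := tr_rank1_ge0 (psi W).
case: (eqVneq (\tr (rank1 (psi W))) 0) => [/tr_rank1_eq0 H | tn0].
  by rewrite pp_rank1 H mulmx0 mxtrace0.
have tp : 0 < \tr (rank1 (psi W)) by rewrite lt_def tn0 t0.
set t := \tr (rank1 (psi W)) in t0 tn0 tp.
have key : 0 <= \tr (E *m (t^-1 *: pp W)).
  have -> : t^-1 *: pp W = prod_op (dfwith (fun k => rank1 (W k)) (t^-1 *: rank1 (W k0))).
    by rewrite prod_op_scale.
  apply: sE.
    exists 1%N, (fun _ => dfwith (fun k => rank1 (W k)) (t^-1 *: rank1 (W k0))); split.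
      move=> _ k; case: (eqVneq k0 k) => [<-|kk]; rewrite ?dfwith_in ?dfwith_out //.
        by apply: psd_scale; [rewrite ltW // invr_gt0 | exact: psd_rank1].
      exact: psd_rank1.
    by rewrite big_ord1.
  rewrite prod_op_scale -/(pp W); split.
    by rewrite pp_rank1; apply: psd_scale; [rewrite ltW // invr_gt0 | exact: psd_rank1].
  by rewrite mxtraceZ pp_rank1 mulVf.
by move: key; rewrite -scalemxAr mxtraceZ pmulr_rge0 ?invr_gt0.
Qed.


Lemma ReD (x y : C) : complex.Re (x + y) = complex.Re x + complex.Re y.
Proof. by case: x => a b; case: y => c d. Qed.

Lemma Re_sum (I : Type) (r : seq I) (P : pred I) (F : I -> C) :
  complex.Re (\sum_(i <- r | P i) F i) = \sum_(i <- r | P i) complex.Re (F i).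
Proof. exact: (big_morph (@complex.Re R) ReD). Qed.

Lemma tr_sum (I : Type) (r : seq I) (P : pred I) (F : I -> MOp R B) :
  \tr (\sum_(i <- r | P i) F i) = \sum_(i <- r | P i) \tr (F i).
Proof. exact: raddf_sum. Qed.

Lemma Re_mul_real (c z : C) : 0 <= c -> complex.Re (c * z) = complex.Re c * complex.Re z.
Proof.
case: c => a b; rewrite lecE /= => /andP [/eqP -> _]; case: z => u v /=.
by rewrite mul0r subr0.
Qed.

Lemma Re_ge0 (z : C) : 0 <= z -> 0 <= complex.Re z.
Proof. by rewrite lecE => /andP [_]. Qed.

Lemma core_gen (E : MOp R B) (f : forall k, Op R (B k)) :
  (forall W, 0 <= complex.Re (\tr (E *m pp W))) ->
  (forall k, psd (f k)) -> 0 <= complex.Re (\tr (E *m prod_op f)).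
Proof.
move=> HW.
suff H : forall S : seq 'I_m, forall (W : forall k, B k -> C) g,
    (forall k, psd (g k)) -> (forall k, k \notin S -> g k = rank1 (W k)) ->
    0 <= complex.Re (\tr (E *m prod_op g)).
  move=> pf; apply: (H (enum 'I_m) (fun k _ => 0)) => // k; by rewrite mem_enum.
elim=> [|k S IH] W g pg Hg.
  have -> : prod_op g = pp W by apply: prod_op_ext => k; exact: Hg.
  exact: HW.
have [lam [w [lam0 gk]]] := spectral_psd (pg k).
have -> : prod_op g = \sum_a lam a *: prod_op (dfwith g (rank1 (w a))).
  rewrite -prod_op_lin -gk; apply: prod_op_ext => j; by rewrite dfwith_id.
rewrite mulmx_sumr tr_sum Re_sum.
apply: sumr_ge0 => a _.
rewrite -scalemxAr mxtraceZ Re_mul_real //; apply: mulr_ge0.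
  exact: Re_ge0.
apply: (IH (dfwith W (w a))).
  move=> j; case: (eqVneq k j) => [<-|kj]; rewrite ?dfwith_in ?dfwith_out //; exact: psd_rank1.
move=> j jS; case: (eqVneq k j) => [<-|kj]; rewrite ?dfwith_in ?dfwith_out //.
apply: Hg; by rewrite inE negb_or eq_sym kj.
Qed.

Lemma core (E : MOp R B) (k0 : 'I_m) (f : forall k, Op R (B k)) :
  sep_dual E -> (forall k, psd (f k)) -> 0 <= complex.Re (\tr (E *m prod_op f)).
Proof. move=> sdE; apply: core_gen => W; exact/Re_ge0/(sep_dual_pp k0 W sdE). Qed.

End Core.


Lemma sup_eq (R : realType) (S : set R) (x0 : R) :
  S x0 -> (forall y, S y -> y <= x0) -> sup S = x0.
Proof.
move=> Sx ub; apply: le_anti; rewrite ge_sup //=; last by exists x0.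
by apply: sup_upper_bound => //; split; [exists x0 | exists x0].
Qed.

Section Gen.
Local Open Scope complex_scope.
Variable R : realType.
Local Notation C := (R[i]).
Variable m : nat.
Variable B : 'I_m -> finType.
Variable J : finType.
Variables (eta : J -> R) (rho : J -> MOp R B) (x : J).

Definition Eop (c : J) : MOp R B := (eta x)%:C *: rho x - (eta c)%:C *: rho c.

Lemma Re_realM (a : R) (z : C) : complex.Re (a%:C * z) = a * complex.Re z.
Proof. by case: z => u v /=; rewrite mul0r subr0. Qed.

Lemma ReN (z : C) : complex.Re (- z) = - complex.Re z.
Proof. by case: z. Qed.

Lemma Re_Eop c (M : MOp R B) : complex.Re (\tr (Eop c *m M)) =
  eta x * complex.Re (\tr (rho x *m M)) - eta c * complex.Re (\tr (rho c *m M)).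
Proof.
rewrite /Eop mulmxBl mxtraceD ReD -scalemxAl mxtraceZ Re_realM.
by rewrite -mulNmx -scaleNr -scalemxAl mxtraceZ -rmorphN Re_realM mulNr.
Qed.

Lemma succ_bound (M : J -> MOp R B) : \tr (rho x) = 1 ->
  \sum_j M j = 1%:M -> (forall j, 0 <= complex.Re (\tr (Eop j *m M j))) ->
  succ eta rho M <= eta x.
Proof.
move=> trx sM pos; rewrite /succ.
apply: (@le_trans _ _ (\sum_j eta x * complex.Re (\tr (rho x *m M j)))).
  apply: ler_sum => j _; have := pos j; rewrite Re_Eop subr_ge0; exact.
rewrite -mulr_sumr -Re_sum -(@tr_sum _ _ B) -mulmx_sumr sM mulmx1 trx /=.
by rewrite mulr1.
Qed.

Definition M0 (j : J) : MOp R B := if j == x then 1%:M else 0.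

Lemma succ_M0 : \tr (rho x) = 1 -> succ eta rho M0 = eta x.
Proof.
move=> trx; rewrite /succ (bigD1 x) //= big1 ?addr0.
  by rewrite /M0 eqxx mulmx1 trx /= mulr1.
by move=> j /negbTE jx; rewrite /M0 jx mulmx0 mxtrace0 /= mulr0.
Qed.

Lemma sum_M0 : \sum_j M0 j = 1%:M.
Proof.
rewrite (bigD1 x) //= big1 ?addr0; first by rewrite /M0 eqxx.
by move=> j /negbTE jx; rewrite /M0 jx.
Qed.

Lemma locc_M0 : locc_meas M0.
Proof.
exists [:: (1%:M, x)]; split; first exact: locc_stop.
move=> j; rewrite big_cons big_nil /= /M0 eq_sym.
by case: (j == x); rewrite ?addr0 // adj1 mulmx1.
Qed.

Lemma sep_M0 (k0 : 'I_m) : sep_meas M0.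
Proof.
split; first split.
- by move=> j; rewrite /M0; case: (j == x); [exact: psd1 | exact: psd0].
- exact: sum_M0.
move=> j; rewrite /M0; case: (j == x).
  by exists 1%N, (fun _ => ones); split; [move=> _ k; exact: psd1 | rewrite big_ord1 prod_op_ones].
by exists 0%N, (fun _ => ones); split; [move=> [] | rewrite big_ord0].
Qed.

Lemma gen_pL (k0 : 'I_m) : \tr (rho x) = 1 -> (forall c, sep_dual (Eop c)) ->
  p_L eta rho = eta x.
Proof.
move=> trx sd; apply: sup_eq; first by exists M0; split; [exact: locc_M0 | rewrite succ_M0].
move=> _ [M [[s [ls HM]] ->]]; have [sum1 good] := locc_inv ls.
apply: succ_bound => //.
  transitivity (\sum_j \sum_(p <- s | p.2 == j) adj p.1 *m p.1).
    by apply: eq_bigr => j _; rewrite HM.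
  rewrite -sum1 (exchange_big_dep xpredT) //=; apply: eq_bigr => p _.
  by rewrite (big_pred1 p.2) // => j; rewrite eq_sym.
move=> j; rewrite HM mulmx_sumr tr_sum Re_sum big_seq_cond; apply: sumr_ge0 => p /andP [ps _].
have [h [ph ->]] := good p ps; exact: core.
Qed.

Lemma gen_pSEP (k0 : 'I_m) : \tr (rho x) = 1 -> (forall c, sep_dual (Eop c)) ->
  p_SEP eta rho = eta x.
Proof.
move=> trx sd; apply: sup_eq; first by exists M0; split; [exact: sep_M0 | rewrite succ_M0].
move=> _ [M [[[_ sM] sepM] ->]]; apply: succ_bound => // j.
have [N [f [pf ->]]] := sepM j.
rewrite mulmx_sumr tr_sum Re_sum; apply: sumr_ge0 => i _; exact: core.
Qed.

End Gen.


Section Chain.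
Variable R : realType.
Local Notation C := (R[i]).
Variable m : nat.
Variable B : 'I_m -> finType.
Variable J : finType.
Variables (x c : J) (Pi : forall k, Op R (B k)).
Hypotheses (hP : forall k, adj (Pi k) = Pi k) (iP : forall k, Pi k *m Pi k = Pi k).

Fixpoint chain (ks : seq 'I_m) : seq (MOp R B * J) :=
  match ks with
  | [::] => [:: (1%:M, c)]
  | k :: ks' => flatten [seq [seq (p.1 *m embed ach.2, p.2) | p <- ach.1]
                        | ach <- zip [:: chain ks'; [:: (1%:M, x)]] [:: Pi k; 1%:M - Pi k]]
  end.

Lemma kraus2 k : \sum_(a <- [:: Pi k; 1%:M - Pi k]) adj a *m a = 1%:M.
Proof.
rewrite big_cons big_cons big_nil addr0 adjD adjN adj1 hP iP.
by rewrite mulmxBl mul1mx mulmxBr mulmx1 iP subrr subr0 addrC subrK.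
Qed.

Lemma chain_locc ks : locc_leaves (chain ks).
Proof.
elim: ks => [|k ks IH]; first exact: locc_stop.
apply: locc_round; first exact: kraus2.
  by [].
by case=> [|[|]] //= _; exact: locc_stop.
Qed.

Lemma chain_unfold k ks : chain (k :: ks) =
  [seq (p.1 *m embed (Pi k), p.2) | p <- chain ks] ++ [:: (1%:M *m embed (1%:M - Pi k), x)].
Proof. by []. Qed.

Definition Mc ks (j : J) : MOp R B := \sum_(p <- chain ks | p.2 == j) adj p.1 *m p.1.

Lemma Mc_step k ks j : x != j ->
  Mc (k :: ks) j = adj (embed (Pi k)) *m Mc ks j *m embed (Pi k).
Proof.
move=> /negbTE xj; rewrite /Mc chain_unfold big_cat big_map /= big_cons /= xj big_nil addr0.
rewrite mulmx_sumr mulmx_suml; apply: eq_bigr => p _.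
by rewrite adj_mul !mulmxA.
Qed.

Lemma Mc_c ks : c != x -> uniq ks ->
  Mc ks c = prod_op (fun j => if j \in ks then Pi j else 1%:M).
Proof.
move=> cx; elim: ks => [|k ks IH].
  move=> _; rewrite /Mc /= big_cons eqxx big_nil addr0 adj1 mulmx1 -prod_op_ones.
  by apply: prod_op_ext.
rewrite cons_uniq => /andP [kks uks].
rewrite Mc_step ?(eq_sym x) // IH // gram_step (negbTE kks) mulmx1 hP iP.
apply: prod_op_ext => j; case: (eqVneq k j) => [<-|kj].
  by rewrite dfwith_in mem_head.
by rewrite dfwith_out // inE eq_sym (negbTE kj).
Qed.

Lemma Mc_other ks j : j != x -> j != c -> Mc ks j = 0.
Proof.
move=> jx jc; elim: ks => [|k ks IH].
  by rewrite /Mc /= big_cons eq_sym (negbTE jc) big_nil.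
by rewrite Mc_step 1?eq_sym // IH mulmx0 mul0mx.
Qed.

End Chain.


Section Nec.
Variable R : realType.
Local Notation C := (R[i]).
Variable m : nat.
Variable B : 'I_m -> finType.
Variable J : finType.

Lemma locc_sumM (s : seq (MOp R B * J)) : locc_leaves s ->
  \sum_j \sum_(p <- s | p.2 == j) adj p.1 *m p.1 = 1%:M.
Proof.
move=> ls; have [sum1 _] := locc_inv ls.
rewrite -sum1 (exchange_big_dep xpredT) //=; apply: eq_bigr => p _.
by rewrite (big_pred1 p.2) // => j; rewrite eq_sym.
Qed.

Lemma tr_adj p (A : 'M[C]_p) : \tr (adj A) = (\tr A)^*%C.
Proof. by rewrite /mxtrace rmorph_sum; apply: eq_bigr => i _; rewrite /adj !mxE. Qed.

Lemma tr_herm_real (E S : MOp R B) : hermitian E -> hermitian S ->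
  complex.Im (\tr (E *m S)) = 0.
Proof.
move=> hE hS.
have : (\tr (E *m S))^*%C = \tr (E *m S).
  by rewrite -tr_adj adj_mul hE hS mxtrace_mulC.
case: (\tr (E *m S)) => a b /= [] /eqP; rewrite eq_sym -subr_eq0 opprK => /eqP H.
by move: H; rewrite -mulr2n -mulr_natr => /eqP; rewrite mulf_eq0 pnatr_eq0 orbF => /eqP.
Qed.

Lemma prod_op_zero (f : forall k, Op R (B k)) k : f k = 0 -> prod_op f = 0.
Proof.
move=> fk; apply: ent_ext => X Y; rewrite ent_prod_op ent0 (bigD1 k) //= fk ent0 mul0r.
by [].
Qed.


Definition normv (T : finType) (w : T -> C) : T -> C :=
  fun a => (sqrtC (\tr (rank1 w)))^-1 * w a.

Lemma normv_prop (T : finType) (w : T -> C) : \tr (rank1 w) != 0 ->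
  \sum_a normv w a * (normv w a)^*%C = 1 /\
  rank1 (normv w) = (\tr (rank1 w))^-1 *: rank1 w.
Proof.
move=> nz; have n0 := tr_rank1_ge0 w.
set n := \tr (rank1 w) in nz n0 *.
have s0 : 0 <= (sqrtC n)^-1 by rewrite invr_ge0 sqrtC_ge0.
have cs : ((sqrtC n)^-1)^*%C = (sqrtC n)^-1 by exact: geC0_conj.
have ss : (sqrtC n)^-1 * (sqrtC n)^-1 = n^-1 by rewrite -expr2 exprVn sqrtCK.
have key a b : normv w a * (normv w b)^*%C = n^-1 * (w a * (w b)^*%C).
  have cs2 z : ((sqrtC n)^-1 * z)^*%C = (sqrtC n)^-1 * z^*%C.
    by rewrite rmorphM; congr (_ * _); exact: cs.
  rewrite /normv -/n cs2 -ss -!mulrA; congr (_ * _).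
  by rewrite mulrCA.
split.
  under eq_bigr do rewrite key.
  by rewrite -mulr_sumr -tr_rank1 mulVf.
by apply: ent_ext => a b; rewrite ent_scale !entE key.
Qed.

Lemma rank1_idem (T : finType) (u : T -> C) : \sum_a u a * (u a)^*%C = 1 ->
  rank1 u *m rank1 u = rank1 u.
Proof.
move=> H; apply: ent_ext => a b; rewrite ent_mul entE.
have E p q r s : p * q * (r * s) = p * s * (r * q) :> C.
  by rewrite [r * s]mulrC mulrACA [q * r]mulrC.
under eq_bigr do rewrite !entE E.
by rewrite -big_distrr /= H mulr1.
Qed.

End Nec.


Section Nec2.
Variable R : realType.
Local Notation C := (R[i]).
Variable m : nat.
Variable B : 'I_m -> finType.
Variable J : finType.

Lemma gen_nec (eta : J -> R) (rho : J -> MOp R B) (x : J) :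
  0 < eta x -> \tr (rho x) = 1 -> (forall j, hermitian (rho j)) ->
  p_L eta rho = eta x -> forall c, sep_dual (Eop eta rho x c).
Proof.
move=> ex trx hr pL c.
have hE : hermitian (Eop eta rho x c).
  by rewrite /Defs.hermitian /Eop adjD adjN !adjZ !hr !conjc_real.
case: (eqVneq c x) => [->|cx].
  rewrite /Eop subrr; split; first exact: adj0.
  by move=> S _ _; rewrite mul0mx mxtrace0.
split => // S [N [f [pf HS]]] [pS trS].
set E := Eop eta rho x c in hE *.
rewrite lecE; apply/andP; split.
  by rewrite tr_herm_real //; exact: pS.1.
change (0 <= complex.Re (\tr (E *m S))).
rewrite leNgt; apply/negP => neg.
have [i negi] : exists i, complex.Re (\tr (E *m prod_op (f i))) < 0.
  apply: contrapT => Hn; move: neg; rewrite HS mulmx_sumr tr_sum Re_sum; apply/negP.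
  rewrite -leNgt; apply: sumr_ge0 => i _; rewrite leNgt; apply/negP => lt.
  by apply: Hn; exists i.
have [W negW] : exists W, complex.Re (\tr (E *m pp W)) < 0.
  apply: contrapT => Hn; move: negi; apply/negP; rewrite -leNgt.
  apply: core_gen (pf i) => W; rewrite leNgt; apply/negP => lt.
  by apply: Hn; exists W.
have nz k : \tr (rank1 (W k)) != 0.
  apply/eqP => /tr_rank1_eq0 H0; move: negW.
  by rewrite /pp (@prod_op_zero _ _ _ _ k) // mulmx0 mxtrace0 ltxx.
pose u := fun k => normv (W k).
pose Pi := fun k => rank1 (u k).
have hP k : adj (Pi k) = Pi k by exact: (psd_rank1 _).1.
have iP k : Pi k *m Pi k = Pi k by apply: rank1_idem; exact: (normv_prop (nz k)).1.
pose M := Mc x c Pi (enum 'I_m).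
have lM : locc_meas M by exists (chain x c Pi (enum 'I_m)); split; [exact: chain_locc | by []].
have Mc_eq : M c = pp u.
  rewrite /M Mc_c // ?enum_uniq //; apply: prod_op_ext => j; by rewrite mem_enum.
have sumM : \sum_j M j = 1%:M := locc_sumM (chain_locc x c hP iP (enum 'I_m)).
have Mx : M x = 1%:M - M c.
  rewrite -sumM (bigD1 x) //= (bigD1 c) //= big1 ?addr0 ?addrK //.
  by move=> j /andP [jx jc]; rewrite /M Mc_other.
have succ_eq : succ eta rho M = eta x - complex.Re (\tr (E *m M c)).
  rewrite /succ (bigD1 x) //= (bigD1 c) //= big1 ?addr0; last first.
    by move=> j /andP [jx jc]; rewrite /M Mc_other // mulmx0 mxtrace0 mulr0.
  rewrite /E Re_Eop Mx mulmxBr mulmx1 mxtraceD ReD trx raddfN ReN /=.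
  set a := complex.Re (\tr (rho x *m M c)); set b := complex.Re (\tr (rho c *m M c)).
  ring.
have pu : complex.Re (\tr (E *m pp u)) < 0.
  have -> : pp u = (\prod_k (\tr (rank1 (W k)))^-1) *: pp W.
    apply: ent_ext => X Y; rewrite ent_scale !ent_prod_op -big_split /=.
    by apply: eq_bigr => k _; rewrite /u (normv_prop (nz k)).2 ent_scale.
  rewrite -scalemxAr mxtraceZ Re_mul_real; last first.
    by apply: prodr_ge0 => k _; rewrite invr_ge0 tr_rank1_ge0.
  rewrite pmulr_rlt0 //.
  have : 0 < \prod_k (\tr (rank1 (W k)))^-1.
    apply: prodr_gt0 => k _; rewrite invr_gt0 lt_def nz tr_rank1_ge0 //.
  by rewrite ltcE => /andP [_].
have : succ eta rho M <= eta x.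
  rewrite -pL; apply: sup_upper_bound; last by exists M.
  apply: contrapT => nh; move: pL; rewrite /p_L sup_out // => e0.
  by move: ex; rewrite -e0 ltxx.
rewrite succ_eq Mc_eq; lra.
Qed.

End Nec2.


Section Slice.
Variable R : realType.
Local Notation C := (R[i]).
Variable m : nat.
Variable d : 'I_m -> nat.
Variable L : nat.

Local Notation Q := (gbasis (qudits d)).
Local Notation G := (gbasis (copies d L)).

Definition unslice (a : {ffun 'I_L -> Q}) : G :=
  finfun (fun k => ([ffun l => a l k] : {ffun 'I_L -> 'I_(d k)})).

Lemma sliceK (X : G) : unslice [ffun l => slice X l] = X.
Proof.
apply/ffunP => k; rewrite /unslice ffunE; apply/ffunP => l; by rewrite !ffunE.
Qed.

Lemma unsliceK (a : {ffun 'I_L -> Q}) : [ffun l => slice (unslice a) l] = a.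
Proof.
apply/ffunP => l; rewrite ffunE; apply/ffunP => k; rewrite /slice !ffunE.
by [].
Qed.

Definition st (tau : 'I_L -> MOp R (qudits d)) : MOp R (copies d L) :=
  opE (fun X Y : G => \prod_(l < L) ent (tau l) (slice X l) (slice Y l)).

Lemma sum_slices (F : 'I_L -> Q -> C) :
  \sum_(X : G) \prod_l F l (slice X l) = \prod_l \sum_(a : Q) F l a.
Proof.
rewrite bigA_distr_bigA /=.
rewrite (reindex unslice); last first.
  exists (fun X => [ffun l => slice X l]) => a _; [exact: unsliceK | exact: sliceK].
apply: eq_bigr => a _; apply: eq_bigr => l _.
by have := congr1 (fun g : {ffun 'I_L -> Q} => g l) (unsliceK a); rewrite ffunE => ->.
Qed.


Lemma tr_st_mul (tau tau' : 'I_L -> MOp R (qudits d)) :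
  \tr (st tau *m st tau') = \prod_l \tr (tau l *m tau' l).
Proof.
rewrite (@ent_tr _ G).
under [LHS]eq_bigr => X _.
  rewrite ent_mul.
  under eq_bigr => Z _ do rewrite /st !entE -big_split /=.
  rewrite (sum_slices (fun l b => ent (tau l) (slice X l) b * ent (tau' l) b (slice X l))).
  over.
rewrite [LHS](sum_slices (fun l a => \sum_b ent (tau l) a b * ent (tau' l) b a)).
by apply: eq_bigr => l _; rewrite ent_tr; apply: eq_bigr => a _; rewrite ent_mul.
Qed.

Lemma tr_st (tau : 'I_L -> MOp R (qudits d)) :
  \tr (st tau) = \prod_l \tr (tau l).
Proof.
rewrite (@ent_tr _ G); under [LHS]eq_bigr => X _ do rewrite /st entE.
rewrite [LHS](sum_slices (fun l a => ent (tau l) a a)).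
by apply: eq_bigr => l _; rewrite ent_tr.
Qed.

Lemma herm_st (tau : 'I_L -> MOp R (qudits d)) :
  (forall l, hermitian (tau l)) -> hermitian (st tau).
Proof.
move=> h; apply: ent_ext => X Y; rewrite ent_adj /st !entE rmorph_prod.
apply: eq_bigr => l _.
by have := congr1 (fun A => ent A (slice X l) (slice Y l)) (h l); rewrite ent_adj => <-.
Qed.

End Slice.


Section NegPure.
Variable R : realType.
Local Notation C := (R[i]).
Variable m : nat.
Variable B : 'I_m -> finType.

Lemma neg_pure (E S : MOp R B) : hermitian E -> separable S -> psd S ->
  ~ (0 <= \tr (E *m S)) -> exists W, complex.Re (\tr (E *m pp W)) < 0.
Proof.
move=> hE [N [f [pf HS]]] pS nn.
have neg : complex.Re (\tr (E *m S)) < 0.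
  rewrite ltNge; apply/negP => H; apply: nn; rewrite lecE H andbT.
  by rewrite tr_herm_real //; exact: pS.1.
have [i negi] : exists i, complex.Re (\tr (E *m prod_op (f i))) < 0.
  apply: contrapT => Hn; move: neg; rewrite HS mulmx_sumr tr_sum Re_sum; apply/negP.
  rewrite -leNgt; apply: sumr_ge0 => i _; rewrite leNgt; apply/negP => lt.
  by apply: Hn; exists i.
apply: contrapT => Hn; move: negi; apply/negP; rewrite -leNgt.
apply: core_gen (pf i) => W; rewrite leNgt; apply/negP => lt.
by apply: Hn; exists W.
Qed.

Lemma tr_basis (A : MOp R B) (y : gbasis B) :
  \tr (A *m pp (fun k (a : B k) => ((a == y k)%:R : C))) = ent A y y.
Proof.
have e : forall X : gbasis B, psi (fun k (a : B k) => ((a == y k)%:R : C)) X = (X == y)%:R.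
  move=> X; rewrite /psi eq_gbasis.
  rewrite (_ : [forall k, X k == y k] = [forall k, predT k ==> (X k == y k)]) //.
  by rewrite -prod_nat_bool.
rewrite pp_rank1 ent_tr (bigD1 y) //= big1 ?addr0; last first.
  move=> X /negbTE Xy; rewrite ent_mul big1 // => Z _.
  by rewrite entE e e Xy mulr0n conjc0 !mulr0.
rewrite ent_mul (bigD1 y) //= big1 ?addr0; last first.
  by move=> Z /negbTE Zy; rewrite entE e Zy mulr0n mul0r mulr0.
by rewrite entE e eqxx mulr1n conjc1 !mulr1.
Qed.

End NegPure.

Section SliceSD.
Variable R : realType.
Local Notation C := (R[i]).
Variable m : nat.
Variable d : 'I_m -> nat.
Variable L : nat.
Variable n : 'I_L -> nat.

Lemma pos_diag (T : finType) (A : Op R T) : state A -> exists y, 0 < ent A y y.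
Proof.
move=> [pA trA]; apply: contrapT => H.
have z y : ent A y y = 0.
  have ge : 0 <= ent A y y by exact: psd_diag.
  case: (eqVneq (ent A y y) 0) => // nz; exfalso; apply: H; exists y; by rewrite lt_def nz ge.
by move: trA; rewrite ent_tr big1 // => /esym/eqP; rewrite oner_eq0.
Qed.

Lemma prodD1 (F : 'I_L -> C) l : \prod_i F i = F l * \prod_(i | i != l) F i.
Proof. exact: bigD1. Qed.

Lemma slice_sd (eta : forall l, 'I_(n l) -> R) (rho : forall l, 'I_(n l) -> MOp R (qudits d))
  (x : seq_index n) (k0 : 'I_m) :
  (forall l, ensemble (eta l) (rho l)) ->
  (forall c, sep_dual (Eop (seq_eta eta) (seq_rho rho) x c)) ->
  forall l (c' : 'I_(n l)), sep_dual (Eop (eta l) (rho l) (x l) c').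
Proof.
move=> ens sd l c'.
have hr l0 j : hermitian (rho l0 j) by have [_ [_ st]] := ens l0; exact: (st j).1.1.
have hE : hermitian (Eop (eta l) (rho l) (x l) c').
  by rewrite /Defs.hermitian /Eop adjD adjN !adjZ !hr !conjc_real.
split => // S sepS [pS trS].
apply: contrapT => nneg.
have [W negW] := neg_pure hE sepS pS nneg.
have [y Hy] : exists y : 'I_L -> gbasis (qudits d),
    forall l', 0 < ent (rho l' (x l')) (y l') (y l').
  have [f Hf] := choice (fun l' => pos_diag ((ens l').2.2 (x l'))).
  by exists f.
pose V := fun l' => if l' == l then W else (fun k (a : qudits d k) => ((a == y l' k)%:R : C)).
pose W' := fun k (a : copies d L k) => \prod_l' V l' k (a l').
have Hst : pp W' = st (fun l' => pp (V l')).
  apply: ent_ext => X Y; rewrite pp_rank1 /st !entE /psi /W'.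
  under [RHS]eq_bigr => l' _ do rewrite pp_rank1 entE /psi.
  rewrite !rmorph_prod big_split /=.
  under [X in _ * X = _]eq_bigr => k _ do rewrite rmorph_prod.
  under [X in _ = _ * X]eq_bigr => k _ do rewrite rmorph_prod.
  rewrite [X in X * _ = _]exchange_big [X in _ * X = _]exchange_big /=; congr (_ * _).
    by apply: eq_bigr => l' _; apply: eq_bigr => k _; rewrite /slice ffunE.
  by apply: eq_bigr => l' _; apply: eq_bigr => k _; rewrite /slice ffunE.
pose c := (finfun (dfwith (fun l0 => x l0) c') : seq_index n).
have cl : c l = c' by rewrite /c ffunE dfwith_in.
have cl' l' : l != l' -> c l' = x l' by move=> ll; rewrite /c ffunE dfwith_out.
have := sep_dual_pp k0 W' (sd c).
rewrite Hst.
have e1 : seq_rho rho x = st (fun l0 => rho l0 (x l0)) := erefl.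
have e2 : seq_rho rho c = st (fun l0 => rho l0 (c l0)) := erefl.
rewrite /Eop mulmxBl raddfB /= -!scalemxAl !mxtraceZ e1 e2 !tr_st_mul /seq_eta !rmorph_prod !(prodD1 _ l) cl.
under [X in _ - (_ * X) * _]eq_bigr => l' ll do rewrite cl' 1?eq_sym //.
under [X in _ - _ * (_ * X)]eq_bigr => l' ll do rewrite cl' 1?eq_sym //.
rewrite /V !eqxx.
set P := \prod_(i < L | i != l) _.
set T := \prod_(i < L | i != l) _.
have PT : 0 < P * T.
  apply: mulr_gt0; apply: prodr_gt0 => i il.
    by rewrite ltcE /= eqxx /=; exact: (ens i).1.
  by rewrite (negbTE il) tr_basis.
move=> H; move: negW; apply/negP; rewrite -leNgt; apply: Re_ge0.
rewrite -(pmulr_rge0 _ PT).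
rewrite /Eop mulmxBl raddfB /= -!scalemxAl !mxtraceZ.
set a := \tr (rho l (x l) *m pp W) in H *; set b := \tr (rho l c' *m pp W) in H *.
apply: (le_trans H); rewrite le_eqVlt; apply/orP; left; apply/eqP.
rewrite /GRing.RMorphism.sort /=.
ring.
Qed.

End SliceSD.


Theorem theorem2 (R : realType) (m : nat) (d : 'I_m -> nat)
    (L : nat) (n : 'I_L -> nat)
    (eta : forall l : 'I_L, 'I_(n l) -> R)
    (rho : forall l : 'I_L, 'I_(n l) -> MOp R (qudits d))
    (x : seq_index n) :
  (2 <= m)%N -> (forall k, 2 <= d k)%N -> (0 < L)%N ->
  (forall l, ensemble (eta l) (rho l)) ->
  (p_L (seq_eta eta) (seq_rho rho) = seq_eta eta x <->
     forall c : seq_index n,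
       sep_dual (((seq_eta eta x)%:C)%C *: seq_rho rho x
                 - ((seq_eta eta c)%:C)%C *: seq_rho rho c)) /\
  (p_L (seq_eta eta) (seq_rho rho) = seq_eta eta x ->
     p_L (seq_eta eta) (seq_rho rho) = p_SEP (seq_eta eta) (seq_rho rho) /\
     p_L (seq_eta eta) (seq_rho rho) = \prod_(l < L) p_L (eta l) (rho l)).
Proof.
move=> m2 d2 L0 ens.
have k0 : 'I_m := Ordinal (leq_trans (isT : (0 < 2)%N) m2).
have ex : 0 < seq_eta eta x by apply: prodr_gt0 => l _; exact: (ens l).1.
have trl l : \tr (rho l (x l)) = 1 by exact: ((ens l).2.2 (x l)).2.
have trx : \tr (seq_rho rho x) = 1.
  have -> : seq_rho rho x = st (fun l0 => rho l0 (x l0)) := erefl.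
  by rewrite tr_st big1 // => l _; exact: trl.
have hr : forall c, hermitian (seq_rho rho c).
  move=> c; apply: herm_st => l; exact: ((ens l).2.2 (c l)).1.1.
split.
  split; first exact: gen_nec ex trx hr.
  exact: gen_pL k0 trx.
move=> H; have sd := gen_nec ex trx hr H.
split; first by rewrite H (gen_pSEP k0 trx sd).
rewrite H /seq_eta; apply: eq_bigr => l _.
by rewrite (gen_pL k0 (trl l) (slice_sd k0 ens sd (l:=l))).
Qed.
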